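(* Let $A\in\mathbb{C}^{N\times N}$ with $\|A\|\leq1$, with Jordan decomposition $A=P\Lambda P^{-1}$, $\Lambda=\Lambda_1\oplus\cdots\oplus\Lambda_M$ where $\Lambda_j$ is a Jordan block with eigenvalue $\lambda_j$, and suppose every Jordan block has dimension at most $m_{\max}$. Let $\kappa=\min\|P\|\,\|P^{-1}\|$ over all such Jordan decompositions and let $K\geq\kappa$. For $\mu\in\mathbb{C}$ with $|\mu|\leq1$, let $C(\mu)=\sigma_{\min}(A-\mu I)$. Then $$C(\mu)\;\leq\;\min_{j}|\mu-\lambda_j|\;\leq\;3\,(K\,C(\mu))^{1/m_{\max}}.$$
   Context: $\|\cdot\|$ is the spectral norm; $\sigma_{\min}$ denotes the smallest singular value. *)

(* Defs.v *)
From HB Require Import structures.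
From mathcomp Require Import all_boot all_order all_algebra.
From mathcomp Require Import all_classical all_reals.
From mathcomp Require Import complex.
Set Implicit Arguments. Unset Strict Implicit. Unset Printing Implicit Defensive.
Import Order.TTheory GRing.Theory Num.Theory.
Local Open Scope ring_scope.
Local Open Scope classical_set_scope.

Definition cmod (R : realType) (z : R[i]) : R := ComplexField.Normc.normc z.

Definition vnorm (R : realType) (N : nat) (v : 'cV[R[i]]_N) : R :=
  Num.sqrt (\sum_(i < N) cmod (v i 0) ^+ 2).

Definition specnorm (R : realType) (N : nat) (A : 'M[R[i]]_N) : R :=
  sup [set vnorm (A *m v) | v in [set v : 'cV[R[i]]_N | vnorm v = 1]].

Definition sigma_min (R : realType) (N : nat) (A : 'M[R[i]]_N) : R :=
  inf [set vnorm (A *m v) | v in [set v : 'cV[R[i]]_N | vnorm v = 1]].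

Definition jordan_block (R : realType) (n : nat) (lam : R[i]) : 'M[R[i]]_n :=
  \matrix_(i < n, j < n)
    (if i == j then lam else if (j : nat) == i.+1 then 1 else 0).

Definition is_jordan_decomp (R : realType) (N : nat) (A P : 'M[R[i]]_N)
    (M : nat) (s : 'I_M -> nat) (l : 'I_M -> R[i]) : Prop :=
  P \in unitmx /\ (forall j, (0 < s j)%N) /\
  exists E : (\sum_(j < M) s j)%N = N,
    A = P *m castmx (E, E) (mxdiag (fun j => jordan_block (s j) (l j)))
          *m invmx P.

Definition jordan_kappa (R : realType) (N : nat) (A : 'M[R[i]]_N) : R :=
  inf [set specnorm P * specnorm (invmx P) |
       P in [set P : 'M[R[i]]_N |
             exists M (s : 'I_M -> nat) (l : 'I_M -> R[i]),
               is_jordan_decomp A P s l]].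

(* Main.v *)
Require Import Defs.
From HB Require Import structures.
From mathcomp Require Import all_boot all_order all_algebra.
From mathcomp Require Import all_classical all_reals.
From mathcomp Require Import complex.
From mathcomp Require Import exp.
Import Order.TTheory GRing.Theory Num.Theory.
Set Implicit Arguments. Unset Strict Implicit. Unset Printing Implicit Defensive.
Local Open Scope ring_scope.
Section Basics.
Variable R : realType.
Local Notation C := R[i].

Lemma cmod_ge0 (z : C) : 0 <= cmod z.
Proof. by case: z => a b; rewrite /cmod /= sqrtr_ge0. Qed.

Lemma cmodM (x y : C) : cmod (x * y) = cmod x * cmod y.
Proof. exact: ComplexField.Normc.normcM. Qed.

Lemma cmodD (x y : C) : cmod (x + y) <= cmod x + cmod y.
Proof. exact: (@le_normcD R x y). Qed.

Lemma cmodN (x : C) : cmod (- x) = cmod x.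
Proof. exact: (@normcN R x). Qed.

Lemma cmod0 : cmod (0 : C) = 0.
Proof. exact: ComplexField.Normc.normc0. Qed.

Lemma cmod1 : cmod (1 : C) = 1.
Proof. exact: ComplexField.Normc.normc1. Qed.

Lemma cmod_eq0 (z : C) : cmod z = 0 -> z = 0.
Proof. exact: ComplexField.Normc.eq0_normc. Qed.

Lemma cmodV (z : C) : cmod z^-1 = (cmod z)^-1.
Proof. exact: ComplexField.Normc.normcV. Qed.

Lemma cmodR (r : R) : 0 <= r -> cmod (r%:C)%C = r.
Proof. by move=> r0; rewrite /cmod /= expr0n /= addr0 sqrtr_sqr ger0_norm. Qed.

Lemma cmodB (x y : C) : cmod (x - y) = cmod (y - x).
Proof. by rewrite -cmodN opprB. Qed.

Lemma cmod_sum (I : finType) (F : I -> C) :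
  cmod (\sum_i F i) <= \sum_i cmod (F i).
Proof.
apply: (big_ind2 (fun x y => cmod x <= y)); first by rewrite cmod0.
  by move=> x1 x2 y1 y2 h1 h2; apply: le_trans (cmodD _ _) (lerD h1 h2).
by [].
Qed.

End Basics.
Section Vec.
Variable R : realType.
Local Notation C := R[i].
Variable n : nat.
Local Notation N := n.+1.

Definition vf (x : 'cV[C]_N) (k : nat) : C := if (k < N)%N then x (inord k) 0 else 0.
Definition nn (X : nat -> C) : R := \sum_(k < N) cmod (X k) ^+ 2.

Lemma vfE (x : 'cV[C]_N) (i : 'I_N) : vf x i = x i 0.
Proof. by rewrite /vf ltn_ord inord_val. Qed.

Lemma vf_out (x : 'cV[C]_N) k : (N <= k)%N -> vf x k = 0.
Proof. by rewrite /vf leqNgt => /negbTE ->. Qed.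

Lemma vnormE (x : 'cV[C]_N) : vnorm x = Num.sqrt (nn (vf x)).
Proof. by rewrite /vnorm /nn; congr Num.sqrt; apply: eq_bigr => i _; rewrite vfE. Qed.

Lemma nn_ge0 X : 0 <= nn X.
Proof. by apply: sumr_ge0 => i _; rewrite exprn_ge0 ?cmod_ge0. Qed.

Lemma vnorm_ge0 (x : 'cV[C]_N) : 0 <= vnorm x.
Proof. exact: sqrtr_ge0. Qed.

Lemma vnorm_eq0 (x : 'cV[C]_N) : vnorm x = 0 -> x = 0.
Proof.
rewrite /vnorm => /eqP; rewrite sqrtr_eq0 => h.
have h0 : \sum_(i < N) cmod (x i 0) ^+ 2 = 0.
  by apply/eqP; rewrite eq_le h sumr_ge0 // => i _; rewrite exprn_ge0 ?cmod_ge0.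
apply/matrixP => i j; rewrite ord1 mxE.
move/eqP: h0; rewrite psumr_eq0; last by move=> k _; rewrite exprn_ge0 ?cmod_ge0.
move=> /allP /(_ i (mem_index_enum _)) /implyP /(_ isT).
by rewrite expf_eq0 /= => /eqP /cmod_eq0.
Qed.

Lemma vnormZ (c : C) (x : 'cV[C]_N) : vnorm (c *: x) = cmod c * vnorm x.
Proof.
rewrite /vnorm.
under eq_bigr => i _ do rewrite mxE cmodM exprMn.
by rewrite -mulr_sumr sqrtrM ?sqr_ge0 // sqrtr_sqr ger0_norm ?cmod_ge0.
Qed.

Lemma vnorm_delta (a : 'I_N) : vnorm (delta_mx a 0 : 'cV[C]_N) = 1.
Proof.
rewrite /vnorm (bigD1 a) //= big1 ?addr0.
  by rewrite mxE !eqxx /= expr1n expr0n /= addr0 sqrtr1 expr1n sqrtr1.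
by move=> i /negbTE hi; rewrite mxE hi /= expr0n /= addr0 sqrtr0 expr0n.
Qed.

Lemma normalize (x : 'cV[C]_N) : x != 0 ->
  exists2 x' : 'cV[C]_N, vnorm x' = 1 & x = ((vnorm x)%:C)%C *: x'.
Proof.
move=> x0; have hp : 0 < vnorm x.
  rewrite lt_def vnorm_ge0 andbT; apply/eqP => /vnorm_eq0 h; by rewrite h eqxx in x0.
exists (((vnorm x)^-1)%:C%C *: x).
  by rewrite vnormZ cmodR ?invr_ge0 ?vnorm_ge0 // mulVf // gt_eqF.
rewrite scalerA -rmorphM /= divff ?gt_eqF //.
by rewrite scale1r.
Qed.

Definition bidiag (b c : nat -> C) : 'M[C]_N :=
  \matrix_(i, j) if (i == j :> nat) then b i else if (j == i.+1 :> nat) then c i else 0.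

Lemma vf_bidiag b c (x : 'cV[C]_N) k :
  vf (bidiag b c *m x) k = if (k < N)%N then b k * vf x k + c k * vf x k.+1 else 0.
Proof.
rewrite /vf; case: ifP => // kN.
rewrite mxE.
have -> : \sum_j bidiag b c (inord k) j * x j 0 =
  \sum_j ((if (inord k == j :> 'I_N) then b k * x j 0 else 0) +
          (if (j == k.+1 :> nat) then c k * x j 0 else 0)).
  apply: eq_bigr => j _; rewrite mxE /= inordK //.
  case: (eqVneq (k : nat) j) => [e|ne].
    have -> : (inord k == j) by apply/eqP/val_inj; rewrite /= inordK.
    by rewrite -e eqn_leq ltnn andbF addr0.
  have -> : (inord k == j) = false by apply/negbTE; apply: contra ne => /eqP <-; rewrite inordK.
  by rewrite add0r; case: (j == k.+1 :> nat); rewrite ?mul0r.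
rewrite big_split /= (bigD1 (inord k)) //= eqxx big1 ?addr0; last first.
  by move=> j /negbTE; rewrite eq_sym => ->.
congr (_ + _).
case: ifP => k1N.
  rewrite (bigD1 (inord k.+1)) //= inordK // eqxx big1 ?addr0 // => j hj.
  case: ifP => // /eqP e; exfalso; move: hj; apply/negP; rewrite negbK.
  by apply/eqP/val_inj; rewrite /= inordK // e.
rewrite big1 ?mulr0 // => j _; case: ifP => // /eqP e.
by move: (ltn_ord j); rewrite e k1N.
Qed.

End Vec.
Arguments bidiag {R n}.
Arguments nn {R} n X.
From mathcomp Require Import lra.
Section CS.
Variable R : realType.

Lemma wCS (I : finType) (w a : I -> R) : (forall i, 0 <= w i) ->
  (\sum_i w i * a i) ^+ 2 <= (\sum_i w i) * (\sum_i w i * a i ^+ 2).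
Proof.
move=> w0.
have e1 : (\sum_i w i * a i) ^+ 2 = \sum_i \sum_j (w i * a i) * (w j * a j).
  by rewrite expr2 mulr_suml; apply: eq_bigr => i _; rewrite mulr_sumr.
have e2 : (\sum_i w i) * (\sum_i w i * a i ^+ 2) = \sum_i \sum_j w i * (w j * a j ^+ 2).
  by rewrite mulr_suml; apply: eq_bigr => i _; rewrite mulr_sumr.
have e3 : (\sum_i w i) * (\sum_i w i * a i ^+ 2) = \sum_i \sum_j w j * (w i * a i ^+ 2).
  by rewrite e2 exchange_big.
rewrite -(@ler_pM2l _ 2) //.
have -> : 2 * ((\sum_i w i) * (\sum_i w i * a i ^+ 2)) =
  \sum_i \sum_j (w i * (w j * a j ^+ 2) + w j * (w i * a i ^+ 2)).
  rewrite mulr2n mulrDl mul1r {1}e2 e3 -big_split /=.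
  by apply: eq_bigr => i _; rewrite -big_split.
rewrite e1 mulr_sumr; apply: ler_sum => i _; rewrite mulr_sumr; apply: ler_sum => j _.
have := mulr_ge0 (mulr_ge0 (w0 i) (w0 j)) (sqr_ge0 (a i - a j)).
move: (w i) (w j) (a i) (a j) => x y u v h.
nra.
Qed.

Lemma shift_sum (n : nat) (f : nat -> R) (t : nat) :
  (forall k, 0 <= f k) -> (forall k, (n.+1 <= k)%N -> f k = 0) ->
  \sum_(k < n.+1) f (k + t)%N <= \sum_(k < n.+1) f k.
Proof.
move=> f0 fo; elim: t => [|t IH]; first by under eq_bigr do rewrite addn0.
apply: le_trans IH.
set g := fun k => f (k + t)%N.
have -> : \sum_(k < n.+1) f (k + t.+1)%N = \sum_(k < n.+1) g k.+1.
  by apply: eq_bigr => k _; rewrite /g addSnnS.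
rewrite big_ord_recr /= [X in _ <= X]big_ord_recl /=.
rewrite /g fo ?leq_addr // addr0 lerDr.
exact: f0.
Qed.

End CS.
Section LB.
Variable R : realType.
Local Notation C := R[i].
Variable n : nat.
Local Notation N := n.+1.

Lemma LB (b c : nat -> C) (dl : R) (m : nat) (x : 'cV[C]_N) :
  0 < dl -> (forall k, (k < N)%N -> dl <= cmod (b k)) -> (forall k, cmod (c k) <= 1) ->
  (forall k, exists2 t, (t < m)%N & c (k + t)%N = 0) ->
  vnorm x <= (\sum_(t < m) dl^-1 ^+ t.+1) * vnorm (bidiag b c *m x).
Proof.
move=> dl0 hb hc hrun.
set X := vf x; set U := vf (bidiag b c *m x).
have hU k : (k < N)%N -> U k = b k * X k + c k * X k.+1.
  by move=> kN; rewrite /U vf_bidiag kN.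
have hUo k : (N <= k)%N -> U k = 0 by move=> h; rewrite /U vf_out.
have bne k : (k < N)%N -> b k != 0.
  move=> kN; apply/eqP => e; have := hb k kN; rewrite e cmod0 => h.
  by move: (lt_le_trans dl0 h); rewrite ltxx.
have di0 : 0 <= dl^-1 by rewrite invr_ge0 ltW.
set w := fun t : 'I_m => dl^-1 ^+ t.+1.
have w0 t : 0 <= w t by rewrite /w exprn_ge0.
have claim : forall r k, (exists2 t, (t < r)%N & c (k + t)%N = 0) ->
    cmod (X k) <= \sum_(t < r) dl^-1 ^+ t.+1 * cmod (U (k + t)%N).
  elim=> [|r IH] k [t ht hct]; first by [].
  have sge0 : 0 <= \sum_(i < r) dl^-1 ^+ (bump 0 i).+1 * cmod (U (k + bump 0 i)%N).
    by apply: sumr_ge0 => i _; rewrite mulr_ge0 ?exprn_ge0 ?cmod_ge0.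
  case: (ltnP k N) => kN; last first.
    rewrite /X vf_out // cmod0; apply: sumr_ge0 => i _.
    by rewrite mulr_ge0 ?exprn_ge0 ?cmod_ge0.
  rewrite big_ord_recl /= addn0 expr1.
  have Xk : X k = (U k - c k * X k.+1) / b k.
    by rewrite hU // addrK [b k * _]mulrC mulfK // bne.
  have hbk := hb k kN.
  have bpos : 0 < cmod (b k) by apply: lt_le_trans dl0 hbk.
  have ibk : (cmod (b k))^-1 <= dl^-1 by rewrite lef_pV2 ?posrE.
  case: (eqVneq (c k) 0) => ck.
    rewrite Xk ck mul0r subr0 cmodM cmodV.
    rewrite -[X in X <= _]addr0; apply: lerD sge0.
    rewrite mulrC ler_wpM2r ?cmod_ge0 //.
  case: t ht hct => [|t] ht hct; first by move: hct; rewrite addn0 => hct; rewrite hct eqxx in ck.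
  have hct2 : c (k.+1 + t)%N = 0 by rewrite addSnnS.
  have := IH k.+1 (ex_intro2 _ _ t ht hct2).
  move=> IHk.
  rewrite Xk cmodM cmodV.
  have ib0 : 0 <= (cmod (b k))^-1 by rewrite invr_ge0 cmod_ge0.
  apply: le_trans (ler_wpM2r ib0 (cmodD _ _)) _.
  rewrite cmodN cmodM mulrDl.
  apply: lerD; first by rewrite mulrC ler_wpM2r ?cmod_ge0.
  have h1 : cmod (c k) * cmod (X k.+1) <= cmod (X k.+1).
    by rewrite ler_piMl ?cmod_ge0.
  apply: le_trans (ler_wpM2r ib0 h1) _.
  apply: le_trans (ler_wpM2l (cmod_ge0 _) ibk) _.
  rewrite mulrC; apply: le_trans (ler_wpM2l di0 IHk) _.
  rewrite mulr_sumr; apply: ler_sum => i _.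
  by rewrite /bump leq0n add1n -addSnnS [dl^-1 ^+ i.+2]exprS mulrA.
have hX kk : cmod (X kk) ^+ 2 <= (\sum_t w t) * \sum_t w t * cmod (U (kk + t)%N) ^+ 2.
  have [t ht hct] := hrun kk.
  have := claim m kk (ex_intro2 _ _ t ht hct) => h.
  apply: le_trans (@wCS R _ w _ w0); rewrite lerXn2r ?nnegrE ?cmod_ge0 //.
  by apply: sumr_ge0 => i _; rewrite mulr_ge0 ?w0 ?cmod_ge0.
set W := \sum_t w t.
have W0 : 0 <= W by apply: sumr_ge0.
have hnn : nn n X <= W ^+ 2 * nn n U.
  rewrite /nn; apply: le_trans (ler_sum (index_enum _) (fun (k : 'I_N) _ => hX k)) _.
  rewrite -mulr_sumr expr2 -mulrA ler_wpM2l // exchange_big /= mulr_suml.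
  apply: ler_sum => t _; rewrite -mulr_sumr ler_wpM2l //.
  apply: (shift_sum (f := fun k => cmod (U k) ^+ 2)).
    by move=> k; rewrite exprn_ge0 ?cmod_ge0.
  by move=> k hk; rewrite hUo // cmod0 expr0n.
rewrite !vnormE -/X -/U.
apply: le_trans (ler_wsqrtr hnn) _.
by rewrite sqrtrM ?exprn_ge0 // sqrtr_sqr ger0_norm.
Qed.

End LB.
Section KER.
Variable R : realType.
Local Notation C := R[i].
Variable n : nat.
Local Notation N := n.+1.

Lemma vf_bidiag_lt (b c : nat -> C) (x : 'cV[C]_N) k : (k < N)%N ->
  vf (bidiag b c *m x) k = b k * vf x k + c k * vf x k.+1.
Proof. by move=> kN; rewrite vf_bidiag kN. Qed.

Lemma bidiag_powS (B : 'M[C]_N) m (x : 'cV[C]_N) : B ^+ m.+1 *m x = B *m (B ^+ m *m x).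
Proof. by rewrite exprS mulmxA mulmxE. Qed.

Lemma vf_eq0 (x : 'cV[C]_N) : (forall k, (k < N)%N -> vf x k = 0) -> x = 0.
Proof.
move=> h; apply/matrixP => i j; rewrite ord1 [RHS]mxE -vfE; exact: h.
Qed.

Lemma KER (b c : nat -> C) (m : nat) (x : 'cV[C]_N) :
  (forall k, c k != 0 -> (k.+1 < N)%N /\ b k.+1 = b k) ->
  (forall k, exists2 t, (t < m)%N & c (k + t)%N = 0) ->
  (bidiag b c) ^+ m.+1 *m x = 0 -> (bidiag b c) ^+ m *m x = 0.
Proof.
move=> hc hrun.
set B := bidiag b c; set Y := B ^+ m *m x.
rewrite bidiag_powS -/Y => hBY.
apply: vf_eq0 => k kN.
case: (eqVneq (b k) 0) => bk; last first.
  have claim1 : forall r k, b k != 0 -> (exists2 t, (t < r)%N & c (k + t)%N = 0) ->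
      vf Y k = 0.
    elim=> [|r IH] k0 bk0 [t ht hct]; first by [].
    case: (ltnP k0 N) => k0N; last by rewrite vf_out.
    have e : b k0 * vf Y k0 + c k0 * vf Y k0.+1 = 0.
      by rewrite -vf_bidiag_lt // -/B hBY /vf k0N mxE.
    case: (eqVneq (c k0) 0) => ck.
      by move: e; rewrite ck mul0r addr0 => /eqP; rewrite mulf_eq0 (negbTE bk0) => /eqP.
    case: t ht hct => [|t] ht hct.
      by move: hct; rewrite addn0 => hct; rewrite hct eqxx in ck.
    have [_ hb1] := hc _ ck.
    have hct2 : c (k0.+1 + t)%N = 0 by rewrite addSnnS.
    have bk1 : b k0.+1 != 0 by rewrite hb1.
    move: e; rewrite (IH k0.+1 bk1 (ex_intro2 _ _ t ht hct2)).
    by rewrite mulr0 addr0 => /eqP; rewrite mulf_eq0 (negbTE bk0) => /eqP.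
  have [t ht hct] := hrun k.
  exact: (claim1 m k bk (ex_intro2 _ _ t ht hct)).
have claim2 : forall j k, b k = 0 -> (k < N)%N ->
    vf (B ^+ j *m x) k = (\prod_(t < j) c (k + t)%N) * vf x (k + j)%N.
  elim=> [|j IH] k0 bk0 k0N.
    by rewrite expr0 mul1mx big_ord0 mul1r addn0.
  rewrite bidiag_powS vf_bidiag_lt // bk0 mul0r add0r big_ord_recl addn0.
  case: (eqVneq (c k0) 0) => ck; first by rewrite ck !mul0r.
  have [k1N hb1] := hc _ ck.
  rewrite IH ?hb1 // mulrA.
  congr (_ * _ * _).
    by apply: eq_bigr => i _; rewrite lift0 addSnnS.
  by rewrite addSnnS.
rewrite /Y claim2 //.
have [t ht hct] := hrun k.
by rewrite (bigD1 (Ordinal ht)) //= hct !mul0r.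
Qed.

End KER.
Section JS.
Variable R : realType.
Local Notation C := R[i].
Variable M : nat.
Variables (s : 'I_M -> nat) (l : 'I_M -> C).

Lemma mxdiagJ (a b : 'I_(\sum_(j < M) s j)) :
  mxdiag (fun j => jordan_block (s j) (l j)) a b =
  if tagnat.sig1 a == tagnat.sig1 b then
    (if (tagnat.sig2 a == tagnat.sig2 b :> nat) then l (tagnat.sig1 a)
     else if (tagnat.sig2 b == (tagnat.sig2 a).+1 :> nat) then 1 else 0)
  else 0.
Proof.
rewrite /mxdiag mxE.
move: (tagnat.sig2 a) (tagnat.sig2 b).
move: (tagnat.sig1 a) (tagnat.sig1 b) => j k.
case: (eqVneq j k) => [<-|ne] u v; last by rewrite mxE.
by rewrite conform_mx_id mxE.
Qed.

Variable n : nat.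
Local Notation N := n.+1.
Variable E : (\sum_(j < M) s j)%N = N.

Definition cst (k : nat) : 'I_(\sum_(j < M) s j) := cast_ord (esym E) (inord k).
Definition blk k := tagnat.sig1 (cst k).
Definition off k : nat := tagnat.sig2 (cst k).
Definition offs (j : 'I_M) := (\sum_(i < M | (i < j)%N) s i)%N.

Lemma R1 k : (k < N)%N -> k = (offs (blk k) + off k)%N.
Proof.
move=> kN; have := tagnat.rect (cst k).
by rewrite /= inordK.
Qed.

Lemma R1b k : (off k < s (blk k))%N.
Proof. exact: ltn_ord. Qed.

Lemma U1 j t : (t < s j)%N ->
  [/\ (offs j + t < N)%N, blk (offs j + t) = j & off (offs j + t) = t].
Proof.
move=> ht; set r := tagnat.Rank j (Ordinal ht).
have vr : (r : nat) = (offs j + t)%N by rewrite tagnat.RankEsum.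
have rN : (offs j + t < N)%N by rewrite -vr -E ltn_ord.
have cr : cst (offs j + t) = r by apply: val_inj; rewrite /= inordK // vr.
split => //; first by rewrite /blk cr tagnat.Rank1K.
by rewrite /off cr tagnat.Rank2K.
Qed.

Lemma Rsucc k : (k.+1 < N)%N -> ((off k).+1 < s (blk k))%N ->
  blk k.+1 = blk k /\ off k.+1 = (off k).+1.
Proof.
move=> k1N ho.
have [_ h1 h2] := U1 ho.
have e : (offs (blk k) + (off k).+1)%N = k.+1.
  by rewrite addnS -R1 // ltnW.
by rewrite -e h1 h2.
Qed.

Definition dJ k : C := if (k < N)%N then l (blk k) else 0.
Definition eJ k : bool := (k.+1 < N)%N && ((off k).+1 < s (blk k))%N.

Lemma J1 : castmx (E, E) (mxdiag (fun j => jordan_block (s j) (l j))) =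
  bidiag dJ (fun k => (eJ k)%:R).
Proof.
apply/matrixP => i i'; rewrite castmxE mxdiagJ mxE.
have ci : cast_ord (esym E) i = cst i by apply: val_inj; rewrite /= inordK.
have ci' : cast_ord (esym E) i' = cst i' by apply: val_inj; rewrite /= inordK.
rewrite ci ci' -/(blk i) -/(blk i') -/(off i) -/(off i').
have Ri := R1 (ltn_ord i); have Ri' := R1 (ltn_ord i').
rewrite /dJ ltn_ord.
case: (eqVneq (blk i) (blk i')) => hb.
  have e1 : (off i == off i') = ((i : nat) == i').
    by rewrite {2}Ri {2}Ri' hb eqn_add2l.
  have e2 : (off i' == (off i).+1) = ((i' : nat) == (i : nat).+1).
    by rewrite {2}Ri {2}Ri' hb -addnS eqn_add2l.
  rewrite e1 e2.
  case: (eqVneq (i : nat) i') => hii //.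
  case: (eqVneq (i' : nat) (i : nat).+1) => // h.
  move: e2; rewrite h eqxx => /eqP e2.
  rewrite /eJ -h ltn_ord /= -e2; have := R1b i'; rewrite -hb h => ->.
  by [].
case: (eqVneq (i : nat) i') => hii2.
  by move: hb; rewrite /blk (_ : cst i = cst i') ?eqxx //; apply: val_inj; rewrite /= hii2.
case: (eqVneq (i' : nat) (i : nat).+1) => // h.
rewrite /eJ -h ltn_ord /=.
case ho : ((off i).+1 < s (blk i))%N => //.
have hlt : ((i : nat).+1 < N)%N by rewrite -h.
have [h1 _] := Rsucc hlt ho.
by move: hb; rewrite -h1 -h eqxx.
Qed.

Hypothesis hs : forall j, (0 < s j)%N.

Lemma J2 k : eJ k -> (k.+1 < N)%N /\ dJ k.+1 = dJ k.
Proof.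
case/andP => k1N ho; have [h1 _] := Rsucc k1N ho.
by split => //; rewrite /dJ k1N ltnW // h1.
Qed.

Lemma J3 k : (k < N)%N -> exists j, dJ k = l j.
Proof. by move=> kN; exists (blk k); rewrite /dJ kN. Qed.

Lemma J4 j : exists a, [/\ (a + s j <= N)%N, (a = 0%N \/ ~~ eJ a.-1),
    (forall t, (t < s j)%N -> dJ (a + t)%N = l j) &
    (forall t, (t.+1 < s j)%N -> eJ (a + t)%N)].
Proof.
exists (offs j); split.
- have ht : ((s j).-1 < s j)%N by rewrite prednK ?hs.
  have [h _ _] := U1 ht.
  by move: h; rewrite -addnS prednK ?hs.
- case: (posnP (offs j)) => h0; [by left | right].
  apply/negP => he; have /andP [k1N ho] := he.
  have [_ h2] := Rsucc k1N ho.
  have [_ _ h3] := U1 (hs j).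
  by move: h2; rewrite prednK // addn0 in h3 *; rewrite h3.
- by move=> t ht; have [h1 h2 _] := U1 ht; rewrite /dJ h1 h2.
- move=> t ht; have [h1 h2 h3] := U1 ht.
  have ht' : (t < s j)%N by apply: ltnW.
  have [_ h2' h3'] := U1 ht'.
  by rewrite /eJ -addnS h1 /= h2' h3'.
Qed.

Lemma J5 m : (forall j, (s j <= m)%N) -> forall k, exists2 t, (t < m)%N & ~~ eJ (k + t)%N.
Proof.
move=> hm k.
have m0 : (0 < m)%N by apply: leq_trans (hs (blk 0)) (hm _).
case: (ltnP k N) => kN; last first.
  exists 0%N => //; rewrite addn0 /eJ.
  by rewrite ltnNge (leq_trans kN) ?leqnSn.
case: (boolP [forall t : 'I_m, eJ (k + t)%N]) => hall; last first.
  by move: hall; rewrite negb_forall => /existsP [t ht]; exists t.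
exfalso.
have ind : forall r, (r <= m)%N ->
    [/\ (k + r < N)%N, blk (k + r)%N = blk k & off (k + r)%N = (off k + r)%N].
  elim=> [|r IH] hr; first by rewrite !addn0.
  have [h1 h2 h3] := IH (ltnW hr).
  have he : eJ (k + r)%N by have := forallP hall (Ordinal hr).
  case/andP: he => k1N ho.
  have [g1 g2] := Rsucc k1N ho.
  by rewrite addnS g1 g2 h2 h3 addnS.
have [_ h2 h3] := ind m (leqnn m).
have := R1b (k + m)%N; rewrite h2 h3 => h.
have := leq_trans h (hm (blk k)).
by rewrite ltnNge leq_addl.
Qed.

End JS.

Lemma JS (R : realType) (M : nat) (s : 'I_M -> nat) (l : 'I_M -> R[i]) (n : nat)
  (E : (\sum_(j < M) s j)%N = n.+1) : (forall j, (0 < s j)%N) ->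
  exists d : nat -> R[i], exists e : nat -> bool,
  [/\ castmx (E, E) (mxdiag (fun j => jordan_block (s j) (l j))) =
        bidiag d (fun k => (e k)%:R),
      (forall k, e k -> (k.+1 < n.+1)%N /\ d k.+1 = d k),
      (forall k, (k < n.+1)%N -> exists j, d k = l j),
      (forall j, exists a, [/\ (a + s j <= n.+1)%N, (a = 0%N \/ ~~ e a.-1),
          (forall t, (t < s j)%N -> d (a + t)%N = l j) &
          (forall t, (t.+1 < s j)%N -> e (a + t)%N)]) &
      (forall m, (forall j, (s j <= m)%N) -> forall k, exists2 t, (t < m)%N & ~~ e (k + t)%N)].
Proof.
move=> hs; exists (dJ l E), (eJ E); split.
- exact: J1.
- exact: J2.
- exact: J3.
- exact: J4.
- exact: J5.
Qed.
Section Ops.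
Variable R : realType.
Local Notation C := R[i].
Variable n : nat.
Local Notation N := n.+1.

Lemma vnorm0 : vnorm (0 : 'cV[C]_N) = 0.
Proof.
rewrite /vnorm big1 ?sqrtr0 // => i _; rewrite mxE cmod0 expr0n //.
Qed.

Lemma vnorm1_entry (x : 'cV[C]_N) j : vnorm x = 1 -> cmod (x j 0) <= 1.
Proof.
move=> h.
have hs : \sum_(i < N) cmod (x i 0) ^+ 2 = 1.
  move: h; rewrite /vnorm => h.
  have h0 : 0 <= \sum_(i < N) cmod (x i 0) ^+ 2.
    by apply: sumr_ge0 => i _; rewrite exprn_ge0 ?cmod_ge0.
  by rewrite -(sqr_sqrtr h0) h expr1n.
have : cmod (x j 0) ^+ 2 <= 1.
  rewrite -hs (bigD1 j) //= lerDl; apply: sumr_ge0 => i _.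
  by rewrite exprn_ge0 ?cmod_ge0.
have := cmod_ge0 (x j 0); move: (cmod (x j 0)) => u h0 h2.
by rewrite -(expr_le1 (n := 2)).
Qed.

Lemma specnorm_ub (P : 'M[C]_N) :
  has_ubound [set vnorm (P *m v) | v in [set v : 'cV[C]_N | vnorm v = 1]].
Proof.
exists (Num.sqrt (\sum_(i < N) (\sum_(j < N) cmod (P i j)) ^+ 2)).
move=> y [v /= hv <-].
rewrite /vnorm; apply: ler_wsqrtr; apply: ler_sum => i _.
have hs0 : 0 <= \sum_(j < N) cmod (P i j) by apply: sumr_ge0 => j _; apply: cmod_ge0.
rewrite lerXn2r ?nnegrE ?cmod_ge0 //.
rewrite mxE; apply: le_trans (cmod_sum _) _.
apply: ler_sum => j _; rewrite cmodM.
by rewrite ler_piMr ?cmod_ge0 ?vnorm1_entry.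
Qed.

Lemma specnorm_ge0 (P : 'M[C]_N) : 0 <= specnorm P.
Proof.
apply: le_trans (vnorm_ge0 (P *m delta_mx 0 0)) _.
apply: (ub_le_sup (specnorm_ub P)).
by exists (delta_mx 0 0) => //=; rewrite vnorm_delta.
Qed.

Lemma SN (P : 'M[C]_N) (x : 'cV[C]_N) : vnorm (P *m x) <= specnorm P * vnorm x.
Proof.
case: (eqVneq x 0) => [->|x0]; first by rewrite mulmx0 vnorm0 mulr0.
have [x' hx' ex] := normalize x0.
rewrite {1}ex -scalemxAr vnormZ cmodR ?vnorm_ge0 // mulrC.
apply: ler_wpM2r; first exact: vnorm_ge0.
apply: (ub_le_sup (specnorm_ub P)).
by exists x'.
Qed.

Lemma sig_le (A : 'M[C]_N) v : vnorm v = 1 -> sigma_min A <= vnorm (A *m v).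
Proof.
move=> hv; apply: (ge_inf (E := [set vnorm (A *m v) | v in [set v : 'cV[C]_N | vnorm v = 1]])).
  by exists 0 => y [w _ <-]; apply: vnorm_ge0.
by exists v.
Qed.

Lemma sig_ge (A : 'M[C]_N) c : (forall v, vnorm v = 1 -> c <= vnorm (A *m v)) ->
  c <= sigma_min A.
Proof.
move=> h; apply: lb_le_inf.
  by exists (vnorm (A *m delta_mx 0 0)), (delta_mx 0 0) => //=; rewrite vnorm_delta.
by move=> y [w hw <-]; apply: h.
Qed.

Lemma sig_ge0 (A : 'M[C]_N) : 0 <= sigma_min A.
Proof. by apply: sig_ge => v _; apply: vnorm_ge0. Qed.

Lemma eig_unit (A : 'M[C]_N) (lam : C) (v : 'cV[C]_N) : v != 0 -> A *m v = lam *: v ->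
  exists2 v' : 'cV[C]_N, vnorm v' = 1 & A *m v' = lam *: v'.
Proof.
move=> v0 hA; have [v' hv' ev] := normalize v0.
exists v' => //.
have r0 : ((vnorm v)%:C)%C != 0.
  apply/eqP => h; move: v0; rewrite ev h scale0r eqxx //.
move: hA; rewrite ev -scalemxAr scalerA mulrC -scalerA => /eqP.
rewrite -subr_eq0 -scalerBr scaler_eq0 (negbTE r0) /= subr_eq0 => /eqP //.
Qed.

Lemma eig_sig (A : 'M[C]_N) (lam mu : C) (v : 'cV[C]_N) : v != 0 -> A *m v = lam *: v ->
  sigma_min (A - mu%:M) <= cmod (mu - lam).
Proof.
move=> v0 hA; have [v' hv' hA'] := eig_unit v0 hA.
apply: le_trans (sig_le _ hv') _.
rewrite mulmxBl hA' mul_scalar_mx -scalerBl vnormZ hv' mulr1 cmodB //.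
Qed.

Lemma eig_norm (A : 'M[C]_N) (lam : C) (v : 'cV[C]_N) : v != 0 -> A *m v = lam *: v ->
  cmod lam <= specnorm A.
Proof.
move=> v0 hA; have [v' hv' hA'] := eig_unit v0 hA.
have := SN A v'; rewrite hA' vnormZ hv' !mulr1 //.
Qed.

End Ops.
Section Conj.
Variable R : realType.
Local Notation C := R[i].
Variable n : nat.
Local Notation N := n.+1.

Lemma vf_inj (x y : 'cV[C]_N) : (forall k, (k < N)%N -> vf x k = vf y k) -> x = y.
Proof.
move=> h; apply/matrixP => i j; rewrite ord1 -!vfE; exact: h.
Qed.

Lemma vf_delta (p : 'I_N) k : vf (delta_mx p 0 : 'cV[C]_N) k = (k == p :> nat)%:R.
Proof.
rewrite /vf; case: ifP => kN; last first.
  by case: eqP => // e; move: (ltn_ord p); rewrite -e kN.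
by rewrite mxE eqxx andbT -(inj_eq val_inj) /= inordK.
Qed.

Lemma vfZ (c : C) (x : 'cV[C]_N) k : vf (c *: x) k = c * vf x k.
Proof. by rewrite /vf; case: ifP; rewrite ?mxE ?mulr0. Qed.

Lemma bidiag_subS (d c : nat -> C) (lam : C) :
  bidiag d c - lam%:M = bidiag (fun k => d k - lam) c :> 'M[C]_N.
Proof.
apply/matrixP => i j; rewrite !mxE.
case: (eqVneq (i : nat) j) => h.
  by have -> : i == j by apply/eqP/val_inj.
have -> : (i == j) = false by apply/negbTE; apply: contra h => /eqP ->.
by rewrite mulr0n subr0.
Qed.

Variables (A P : 'M[C]_N) (d : nat -> C) (e : nat -> bool).
Hypothesis hP : P \in unitmx.
Hypothesis hA : A = P *m bidiag d (fun k => (e k)%:R) *m invmx P.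

Definition Tm (lam : C) := bidiag (fun k => d k - lam) (fun k => (e k)%:R) : 'M[C]_N.

Lemma conjB lam : A - lam%:M = P *m Tm lam *m invmx P.
Proof.
rewrite /Tm -bidiag_subS hA mulmxBr mulmxBl; congr (_ - _).
by rewrite mul_mx_scalar -scalemxAl mulmxV // scalemx1.
Qed.

Lemma conjX lam k : (A - lam%:M) ^+ k = P *m (Tm lam) ^+ k *m invmx P.
Proof.
elim: k => [|k IH]; first by rewrite !expr0 mulmx1 mulmxV.
have mE : forall X Y : 'M[C]_N, X * Y = X *m Y by [].
rewrite exprS IH conjB mE !mulmxA -[_ *m invmx P *m P]mulmxA mulVmx // mulmx1.
by rewrite exprS mE !mulmxA.
Qed.

Lemma Pinj (y : 'cV[C]_N) : P *m y = 0 -> y = 0.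
Proof.
by move=> h; rewrite -[y]mul1mx -(mulVmx hP) -mulmxA h mulmx0.
Qed.

Lemma invPinj (y : 'cV[C]_N) : invmx P *m y = 0 -> y = 0.
Proof.
by move=> h; rewrite -[y]mul1mx -(mulmxV hP) -mulmxA h mulmx0.
Qed.

Lemma conj_vec lam k (v : 'cV[C]_N) :
  (Tm lam) ^+ k *m (invmx P *m v) = invmx P *m ((A - lam%:M) ^+ k *m v).
Proof.
rewrite conjX !mulmxA mulVmx // mul1mx -!mulmxA; congr (_ *m _).
Qed.

Lemma EIGV (a : 'I_N) (lam : C) : d a = lam -> (a = 0%N :> nat \/ ~~ e (a.-1)) ->
  A *m (P *m (delta_mx a 0 : 'cV[C]_N)) = lam *: (P *m (delta_mx a 0 : 'cV[C]_N)) /\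
  P *m (delta_mx a 0 : 'cV[C]_N) != 0.
Proof.
move=> hd ha; split; last first.
  apply/negP => /eqP /Pinj /matrixP /(_ a 0); rewrite !mxE !eqxx /=.
  by move/eqP; rewrite oner_eq0.
have hL : bidiag d (fun k => (e k)%:R) *m (delta_mx a 0 : 'cV[C]_N) = lam *: delta_mx a 0.
  apply: vf_inj => k kN; rewrite vf_bidiag kN vfZ !vf_delta.
  case: (eqVneq k a) => [->|hk]; rewrite /= ?mulr0n ?mulr1n ?mulr0 ?mulr1 ?add0r ?addr0.
    have -> : ((a : nat).+1 == a) = false by apply/negbTE; rewrite gtn_eqF.
    by rewrite hd /= mulr0n mulr0 addr0.
  case: eqP => [h|]; last by rewrite /= mulr0n mulr0.
  case: ha => [ha|ha]; first by rewrite -h in ha.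
  by move: ha; rewrite -h /= => /negbTE ->; rewrite mul0r.
by rewrite hA -!mulmxA [invmx P *m _]mulmxA mulVmx // mul1mx hL scalemxAr.
Qed.

End Conj.
Arguments Tm {R n} d e lam.
Section Chain.
Variable R : realType.
Local Notation C := R[i].
Variable n : nat.
Local Notation N := n.+1.

Definition ev (p : nat) : 'cV[C]_N := delta_mx (inord p) 0.

Lemma vf_ev p k : (p < N)%N -> vf (ev p) k = (k == p)%:R.
Proof. by move=> pN; rewrite /ev vf_delta inordK. Qed.

Variables (d : nat -> C) (e : nat -> bool) (a sj : nat) (lam : C).
Hypotheses (ha : a = 0%N \/ ~~ e a.-1) (hd : forall t, (t < sj)%N -> d (a + t)%N = lam)
  (he : forall t, (t.+1 < sj)%N -> e (a + t)%N) (hN : (a + sj <= N)%N).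

Local Notation T := (bidiag (fun k => d k - lam) (fun k => (e k)%:R) : 'M[C]_N).

Lemma chain0 : (0 < sj)%N -> T *m ev a = 0.
Proof.
move=> s0; have aN : (a < N)%N by apply: leq_trans hN; rewrite -{1}[a]addn0 ltn_add2l.
apply: vf_inj => k kN; rewrite vf_bidiag kN !vf_ev //.
have -> : vf (0 : 'cV[C]_N) k = 0 by rewrite /vf kN mxE.
case: (eqVneq k a) => [->|hk]; rewrite /= ?mulr0n ?mulr1n.
  have -> : (a.+1 == a) = false by apply/negbTE; rewrite gtn_eqF.
  by rewrite -{1}[a]addn0 hd // subrr mul0r /= mulr0n mulr0 addr0.
rewrite mulr0 add0r.
case: eqP => [h|]; last by rewrite /= mulr0n mulr0.
case: ha => [h0|h1]; first by rewrite h0 in h.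
by move: h1; rewrite -h /= => /negbTE ->; rewrite mul0r.
Qed.

Lemma chainS t : (t.+1 < sj)%N -> T *m ev (a + t.+1) = ev (a + t).
Proof.
move=> ht; have aN : (a + t.+1 < N)%N by apply: leq_trans hN; rewrite ltn_add2l.
have aN' : (a + t < N)%N by apply: leq_ltn_trans aN; rewrite leq_add2l.
apply: vf_inj => k kN; rewrite vf_bidiag kN !vf_ev //.
case: (eqVneq k (a + t.+1)%N) => [->|hk]; rewrite /= ?mulr0n ?mulr1n.
  rewrite hd // subrr mul0r add0r.
  have -> : ((a + t.+1).+1 == a + t.+1)%N = false by apply/negbTE; rewrite gtn_eqF.
  have -> : ((a + t.+1)%N == (a + t)%N) = false by apply/negbTE; rewrite addnS gtn_eqF.
  by rewrite (_ : false%:R = 0 :> C) // mulr0.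
rewrite mulr0 add0r addnS eqSS.
case: (eqVneq k (a + t)%N) => [->|hk2]; last by rewrite /= mulr0n mulr0.
by rewrite he //= mulr1n mulr1.
Qed.

End Chain.
Arguments ev {R n} p.
Section Chain2.
Variable R : realType.
Local Notation C := R[i].
Variable n : nat.
Local Notation N := n.+1.
Variables (d : nat -> C) (e : nat -> bool) (a sj : nat) (lam : C).
Hypotheses (ha : a = 0%N \/ ~~ e a.-1) (hd : forall t, (t < sj)%N -> d (a + t)%N = lam)
  (he : forall t, (t.+1 < sj)%N -> e (a + t)%N) (hN : (a + sj <= N)%N).

Local Notation T := (bidiag (fun k => d k - lam) (fun k => (e k)%:R) : 'M[C]_N).

Lemma chainX q : (q < sj)%N -> forall k, (k <= q)%N -> T ^+ k *m ev (a + q) = ev (a + (q - k)).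
Proof.
move=> hq; elim=> [|k IH] hk.
  by rewrite expr0 mul1mx subn0.
rewrite bidiag_powS IH; last exact: ltnW.
have e1 : (q - k = (q - k.+1).+1)%N by rewrite subnS prednK // subn_gt0.
have e2 : ((q - k.+1).+1 < sj)%N by rewrite -e1; apply: leq_ltn_trans hq; apply: leq_subr.
rewrite e1.
exact: (chainS hd he hN e2).
Qed.
Lemma chain_top q : (q < sj)%N ->
  T ^+ q *m ev (a + q) = ev a /\ T ^+ q.+1 *m ev (a + q) = 0.
Proof.
move=> hq; have h := chainX hq (leqnn q).
rewrite subnn addn0 in h; split => //.
have s0 : (0 < sj)%N by apply: leq_ltn_trans hq.
by rewrite bidiag_powS h (chain0 ha hd hN s0).
Qed.
End Chain2.
Section Num.
Variable R : realType.

Lemma argmin (I : finType) (f : I -> R) (i0 : I) : exists j, forall j', f j <= f j'.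
Proof.
case: (@arg_minP _ R I i0 predT f isT) => j _ h; exists j => j'; by apply: h.
Qed.

Lemma Cw_bound (x : R) m : 0 <= x -> 1 <= 2 * x ->
  \sum_(t < m) x ^+ t.+1 <= (2 ^+ m - 1) * x ^+ m.
Proof.
move=> x0 hx; elim: m => [|m IH]; first by rewrite big_ord0 expr0 subrr mul0r.
rewrite big_ord_recr /=.
have z1 : 1 <= (2 : R) ^+ m by rewrite exprn_ege1 // ler1n.
have y0 : 0 <= x ^+ m by rewrite exprn_ge0.
move: IH; rewrite !exprS; move: (\sum_(i < m) x ^+ i.+1) ((2:R) ^+ m) (x ^+ m) z1 y0 => S z y z1 y0 IH.
have a1 : 0 <= z - 1 by rewrite subr_ge0.
have a2 : 0 <= 2 * x - 1 by rewrite subr_ge0.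
have := mulr_ge0 (mulr_ge0 a1 a2) y0.
nra.
Qed.

Lemma root_step (dl X : R) m : (0 < m)%N -> 0 <= dl -> 0 <= X -> dl ^+ m <= 2 ^+ m * X ->
  dl <= 3 * powR X (m%:R)^-1.
Proof.
move=> m0 dl0 X0 h.
have mr : (m%:R : R) != 0 by rewrite pnatr_eq0 -lt0n.
have root : forall y : R, 0 <= y -> powR (y ^+ m) (m%:R)^-1 = y.
  by move=> y y0; rewrite -powR_mulrn // -powRrM divff // powRr1.
have h2 : powR (2 ^+ m * X) (m%:R)^-1 = 2 * powR X (m%:R)^-1.
  by rewrite powRM ?exprn_ge0 // root.
have r0 : 0 <= (m%:R : R)^-1 by rewrite invr_ge0 ler0n.
have := @ge0_ler_powR R (m%:R)^-1 r0 (dl ^+ m) (2 ^+ m * X).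
rewrite !nnegrE root // h2 => /(_ (exprn_ge0 _ dl0) (mulr_ge0 (exprn_ge0 _ (ler0n _ 2)) X0) h) hh.
apply: le_trans hh _; by rewrite ler_wpM2r ?powR_ge0 // ler_nat.
Qed.

End Num.
Section Main.
Variable R : realType.
Local Notation C := R[i].
Variable n : nat.
Local Notation N := n.+1.

Lemma eig_of_decomp (A P : 'M[C]_N) (M : nat) (s : 'I_M -> nat) (l : 'I_M -> C)
  (d : nat -> C) (e : nat -> bool) :
  P \in unitmx -> A = P *m bidiag d (fun k => (e k)%:R) *m invmx P ->
  (forall j, (0 < s j)%N) ->
  (forall j, exists a, [/\ (a + s j <= N)%N, (a = 0%N \/ ~~ e a.-1),
          (forall t, (t < s j)%N -> d (a + t)%N = l j) &
          (forall t, (t.+1 < s j)%N -> e (a + t)%N)]) ->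
  forall j, exists2 v : 'cV[C]_N, v != 0 & A *m v = l j *: v.
Proof.
move=> hP hA hs J4 j.
have [a [haN ha hd he]] := J4 j.
have aN : (a < N)%N by apply: leq_trans haN; rewrite -{1}[a]addn0 ltn_add2l hs.
have hda : d (Ordinal aN) = l j by rewrite /= -{1}[a]addn0 hd.
have [h1 h2] := EIGV hP hA hda ha.
by exists (P *m delta_mx (Ordinal aN) 0).
Qed.

Lemma ce_le1 (e : nat -> bool) k : cmod ((e k)%:R : C) <= 1.
Proof. by case: (e k); rewrite ?cmod1 ?cmod0 ?ler01. Qed.

Lemma eigin_lemma (A P : 'M[C]_N) (M : nat) (l : 'I_M -> C)
  (d : nat -> C) (e : nat -> bool) (mmax : nat) :
  P \in unitmx -> A = P *m bidiag d (fun k => (e k)%:R) *m invmx P ->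
  (forall k, (k < N)%N -> exists j, d k = l j) ->
  (forall k, exists2 t, (t < mmax)%N & ~~ e (k + t)%N) ->
  forall lam (v : 'cV[C]_N), v != 0 -> A *m v = lam *: v -> exists k0, lam = l k0.
Proof.
move=> hP hA J3 J5 lam v v0 hv.
case: (boolP [exists k0, lam == l k0]) => [/existsP [k0 /eqP h]|hno]; first by exists k0.
exfalso.
have [jj _] := J3 0%N isT.
have [j1 hj1] := argmin (fun j => cmod (l j - lam)) jj.
set dl := cmod (l j1 - lam).
have dl0 : 0 < dl.
  rewrite lt_def cmod_ge0 andbT; apply/eqP => /cmod_eq0 /eqP; rewrite subr_eq0 => /eqP h.
  by move: hno; rewrite negb_exists => /forallP /(_ j1); rewrite h eqxx.
have hb : forall k, (k < N)%N -> dl <= cmod (d k - lam).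
  by move=> k kN; have [j hj] := J3 k kN; rewrite hj; apply: hj1.
have hrun : forall k, exists2 t, (t < mmax)%N & ((e (k + t)%N)%:R : C) = 0.
  by move=> k; have [t ht he] := J5 k; exists t => //; rewrite (negbTE he).
have := LB (invmx P *m v) dl0 hb (ce_le1 e) hrun.
have := conj_vec hP hA lam 1 v; rewrite !expr1 => ->.
rewrite mulmxBl hv mul_scalar_mx subrr mulmx0 vnorm0 mulr0 => h0.
have : vnorm (invmx P *m v) = 0 by apply/eqP; rewrite eq_le h0 vnorm_ge0.
move/vnorm_eq0/(invPinj hP) => h; by rewrite h eqxx in v0.
Qed.

Lemma size_lemma (A P P' : 'M[C]_N) (M' : nat) (s' : 'I_M' -> nat) (l' : 'I_M' -> C)
  (d : nat -> C) (e : nat -> bool) (d' : nat -> C) (ee : nat -> bool) (mmax : nat) :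
  P \in unitmx -> A = P *m bidiag d (fun k => (e k)%:R) *m invmx P ->
  (forall k, e k -> (k.+1 < N)%N /\ d k.+1 = d k) ->
  (forall k, exists2 t, (t < mmax)%N & ~~ e (k + t)%N) ->
  P' \in unitmx -> A = P' *m bidiag d' (fun k => (ee k)%:R) *m invmx P' ->
  (forall j, exists a, [/\ (a + s' j <= N)%N, (a = 0%N \/ ~~ ee a.-1),
          (forall t, (t < s' j)%N -> d' (a + t)%N = l' j) &
          (forall t, (t.+1 < s' j)%N -> ee (a + t)%N)]) ->
  forall j, (s' j <= mmax)%N.
Proof.
move=> hP hA J2 J5 hP' hA' J4' j.
rewrite leqNgt; apply/negP => hgt.
have [a [haN ha hd he]] := J4' j.
set lam := l' j.
have [c1 c2] := chain_top ha hd he haN hgt.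
set v := P' *m ev (a + mmax).
have hAv : forall k, (A - lam%:M) ^+ k *m v = P' *m ((Tm d' ee lam) ^+ k *m ev (a + mmax)).
  move=> k; rewrite (conjX hP' hA') /v !mulmxA -[_ *m invmx P' *m P']mulmxA mulVmx //.
  by rewrite mulmx1.
have hx : (Tm d e lam) ^+ mmax.+1 *m (invmx P *m v) = 0.
  by rewrite (conj_vec hP hA) hAv /Tm c2 mulmx0 mulmx0.
have hc : forall k, ((e k)%:R : C) != 0 -> (k.+1 < N)%N /\ d k.+1 - lam = d k - lam.
  move=> k; case hek: (e k); last by rewrite eqxx.
  by move=> _; have [h1 h2] := J2 k hek; rewrite h2.
have hrun : forall k, exists2 t, (t < mmax)%N & ((e (k + t)%N)%:R : C) = 0.
  by move=> k; have [t ht he2] := J5 k; exists t => //; rewrite (negbTE he2).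
have := KER hc hrun hx.
rewrite -/(Tm d e lam) (conj_vec hP hA) hAv /Tm c1 => /(invPinj hP) /(Pinj hP').
move/matrixP => /(_ (inord a) 0); rewrite !mxE !eqxx /=.
by move/eqP; rewrite oner_eq0.
Qed.

Lemma bound_lemma (A P' : 'M[C]_N) (d' : nat -> C) (ee : nat -> bool) (mmax : nat)
  (mu : C) (dl : R) :
  P' \in unitmx -> A = P' *m bidiag d' (fun k => (ee k)%:R) *m invmx P' ->
  0 < dl -> dl <= 2 ->
  (forall k, (k < N)%N -> dl <= cmod (d' k - mu)) ->
  (forall k, exists2 t, (t < mmax)%N & ~~ ee (k + t)%N) ->
  1 <= specnorm P' * specnorm (invmx P') * (2 ^+ mmax * dl^-1 ^+ mmax) * sigma_min (A - mu%:M).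
Proof.
move=> hP' hA' dl0 dl2 hb J5.
have hrun : forall k, exists2 t, (t < mmax)%N & ((ee (k + t)%N)%:R : C) = 0.
  by move=> k; have [t ht he2] := J5 k; exists t => //; rewrite (negbTE he2).
set Cw := \sum_(t < mmax) dl^-1 ^+ t.+1.
have Cw0 : 0 <= Cw by apply: sumr_ge0 => t _; rewrite exprn_ge0 // invr_ge0 ltW.
have sP0 := specnorm_ge0 P'; have sPi0 := specnorm_ge0 (invmx P').
set Q := specnorm P' * Cw * specnorm (invmx P').
have hv : forall v : 'cV[C]_N, vnorm v = 1 -> 1 <= Q * vnorm ((A - mu%:M) *m v).
  move=> v hv.
  have e1 : v = P' *m (invmx P' *m v) by rewrite mulmxA mulmxV // mul1mx.
  have s1 := SN P' (invmx P' *m v); rewrite -e1 hv in s1.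
  have s2 := LB (invmx P' *m v) dl0 hb (ce_le1 ee) hrun.
  have := conj_vec hP' hA' mu 1 v; rewrite !expr1 => hcv.
  rewrite hcv in s2.
  have s3 := SN (invmx P') ((A - mu%:M) *m v).
  apply: le_trans s1 _; rewrite /Q -!mulrA; apply: (ler_wpM2l sP0).
  apply: le_trans s2 _; apply: (ler_wpM2l Cw0); exact: s3.
have Q0 : 0 < Q.
  have Qge0 : 0 <= Q := mulr_ge0 (mulr_ge0 sP0 Cw0) sPi0.
  have := hv _ (@vnorm_delta R n 0); rewrite lt_def Qge0 andbT => h.
  by apply/eqP => hQ; move: h; rewrite hQ mul0r ler10.
have hsig : Q^-1 <= sigma_min (A - mu%:M).
  by apply: sig_ge => v hv1; rewrite -(ler_pM2l Q0) mulfV ?gt_eqF //; apply: hv.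
have hQs : 1 <= Q * sigma_min (A - mu%:M) by rewrite -[1](mulfV (lt0r_neq0 Q0)) ler_pM2l.
apply: le_trans hQs _.
apply: (ler_wpM2r (sig_ge0 _)).
rewrite /Q mulrAC; apply: (ler_wpM2l (mulr_ge0 sP0 sPi0)).
have x0 : 0 <= dl^-1 by rewrite invr_ge0 ltW.
have hx : 1 <= 2 * dl^-1 by rewrite ler_pdivlMr // mul1r.
apply: le_trans (Cw_bound mmax x0 hx) _.
rewrite ler_wpM2r ?exprn_ge0 // lerBlDr lerDl //.
Qed.

End Main.
Lemma main (R : realType) (n : nat) (A P : 'M[R[i]]_n.+1)
  (M : nat) (s : 'I_M -> nat) (l : 'I_M -> R[i]) (mmax : nat) (K : R)
  (mu : R[i]) :
  specnorm A <= 1 ->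
  is_jordan_decomp A P s l ->
  (forall j, (s j <= mmax)%N) ->
  jordan_kappa A <= K ->
  cmod mu <= 1 ->
  (forall j, sigma_min (A - mu%:M) <= cmod (mu - l j)) /\
  (exists j, cmod (mu - l j)
             <= 3 * powR (K * sigma_min (A - mu%:M)) (mmax%:R)^-1).
Proof.
move=> hA1 [hP [hs [E hA]]] hsm hK hmu.
have [d [e [hL J2 J3 J4 J5]]] := JS l E hs.
rewrite hL in hA.
have J5m := J5 mmax hsm.
have eig := eig_of_decomp hP hA hs J4.
split.
  by move=> j; have [v v0 hv] := eig j; exact: eig_sig v0 hv.
have eigin := eigin_lemma hP hA J3 J5m.
have [jj _] := J3 0%N isT.
have [j0 hj0] := argmin (fun j => cmod (mu - l j)) jj.
exists j0; set dl := cmod (mu - l j0).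
set sig := sigma_min (A - mu%:M).
have sig0 : 0 <= sig := sig_ge0 _.
have dlge0 : 0 <= dl := cmod_ge0 _.
have [->|dl_ne] := eqVneq dl 0.
  by apply: mulr_ge0 => //; apply: powR_ge0.
have dl0 : 0 < dl by rewrite lt_def dl_ne dlge0.
have dl2 : dl <= 2.
  have [v v0 hv] := eig j0.
  have hl := le_trans (eig_norm v0 hv) hA1.
  apply: le_trans (cmodD _ _) _; rewrite cmodN.
  by have := lerD hmu hl.
have key : forall P', (exists M' (s' : 'I_M' -> nat) (l' : 'I_M' -> R[i]),
      is_jordan_decomp A P' s' l') ->
    1 <= specnorm P' * specnorm (invmx P') * (2 ^+ mmax * dl^-1 ^+ mmax) * sig.
  move=> P' [M' [s' [l' [hP' [hs' [E' hA']]]]]].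
  have [d' [e' [hL' J2' J3' J4' J5']]] := JS l' E' hs'.
  rewrite hL' in hA'.
  have eig' := eig_of_decomp hP' hA' hs' J4'.
  have hb : forall k, (k < n.+1)%N -> dl <= cmod (d' k - mu).
    move=> k kN; have [j hj] := J3' k kN.
    have [v v0 hv] := eig' j.
    have [k0 hk0] := eigin _ _ v0 hv.
    by rewrite hj hk0 cmodB; apply: hj0.
  have size' := size_lemma hP hA J2 J5m hP' hA' J4'.
  exact: bound_lemma hP' hA' dl0 dl2 hb (J5' mmax size').
have hdec : exists M' (s' : 'I_M' -> nat) (l' : 'I_M' -> R[i]), is_jordan_decomp A P s' l'.
  by exists M, s, l; split => //; split => //; exists E; rewrite hL.
have kP := key P hdec.
have sigp : 0 < sig.
  rewrite lt_def sig0 andbT; apply/eqP => h; move: kP; rewrite h mulr0.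
  by rewrite ler10.
set c := 2 ^+ mmax * dl^-1 ^+ mmax.
have c0 : 0 < c by rewrite mulr_gt0 ?exprn_gt0 ?invr_gt0.
have cs0 : 0 < c * sig by rewrite mulr_gt0.
have hkap : (c * sig)^-1 <= jordan_kappa A.
  apply: lb_le_inf.
    by exists (specnorm P * specnorm (invmx P)), P.
  move=> y [P' hP' <-].
  have := key P' hP'; rewrite -mulrA => h.
  by rewrite -(ler_pM2r cs0) mulVf ?gt_eqF.
have hfin : dl ^+ mmax <= 2 ^+ mmax * (K * sig).
  have h1 : (c * sig)^-1 <= K := le_trans hkap hK.
  have h2 : 1 <= c * sig * K.
    by rewrite -[X in X <= _](mulfV (lt0r_neq0 cs0)) ler_pM2l.
  move: h2; rewrite /c exprVn.
  have dm0 : 0 < dl ^+ mmax by rewrite exprn_gt0.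
  rewrite -(ler_pM2l dm0) mulr1 => h2; apply: le_trans h2 _.
  have dne : dl ^+ mmax != 0 by rewrite lt0r_neq0.
  by rewrite [2 ^+ mmax / _]mulrC -!mulrA mulVKf // [sig * K]mulrC.
have m0 : (0 < mmax)%N by apply: leq_trans (hs j0) (hsm j0).
have K0 : 0 <= K.
  have h1 : (c * sig)^-1 <= K := le_trans hkap hK.
  by apply: le_trans h1; rewrite invr_ge0 ltW // mulr_gt0.
exact: root_step m0 dlge0 (mulr_ge0 K0 sig0) hfin.
Qed.
Unset Implicit Arguments.

Theorem lemma1 (R : realType) (N : nat) (A P : 'M[R[i]]_N)
  (M : nat) (s : 'I_M -> nat) (l : 'I_M -> R[i]) (mmax : nat) (K : R)
  (mu : R[i]) :
  (0 < N)%N ->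
  specnorm A <= 1 ->
  is_jordan_decomp A P s l ->
  (forall j, (s j <= mmax)%N) ->
  jordan_kappa A <= K ->
  cmod mu <= 1 ->
  (forall j, sigma_min (A - mu%:M) <= cmod (mu - l j)) /\
  (exists j, cmod (mu - l j)
             <= 3 * powR (K * sigma_min (A - mu%:M)) (mmax%:R)^-1).
Proof.
case: N A P => [|n] A P h0; first by [].
exact: main.
Qed.
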